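(* Let $\theta_N=1+N^{-2/3}w_N$ where $w_N>0$, $(\log\log N)^2/w_N\to0$ and $w_N/(\log N)^2\to0$. For $1\le i\le N$ let $r_i=1+\sqrt{1-\frac{i-1}{N\theta_N^2}}$, $m_i=1-\sqrt{1-\frac{i-1}{N\theta_N^2}}$, $\gamma_i=m_i/r_i$, and $g_i=1+\gamma_i+\gamma_i\gamma_{i+1}+\dots+\gamma_i\gamma_{i+1}\cdots\gamma_N$. Then for every $k>0$, for all sufficiently large $N$ and all $3\le i\le N-N^{1/3}$, \[ g_i>\frac{r_i}{2(r_i-1)}\big(1-\log^{-k}N\big); \] and for all sufficiently large $N$ and all $3\le i\le N$, \[ g_i<\frac{r_i}{2(r_i-1)}\big(1+w_N^{-3/2}\big). \] *)

(* Defs.v *)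
From Stdlib Require Import Reals Lra.
From Coquelicot Require Import Coquelicot.
Open Scope R_scope.

Definition theta (w : nat -> R) (N : nat) : R :=
  1 + Rpower (INR N) (-(2/3)) * w N.

Definition sq (w : nat -> R) (N i : nat) : R :=
  sqrt (1 - (INR i - 1) / (INR N * (theta w N)^2)).

Definition r_ (w : nat -> R) (N i : nat) : R := 1 + sq w N i.
Definition m_ (w : nat -> R) (N i : nat) : R := 1 - sq w N i.
Definition gam (w : nat -> R) (N i : nat) : R := m_ w N i / r_ w N i.

Fixpoint prodn (f : nat -> R) (i n : nat) : R :=
  match n with
  | O => 1
  | S n' => prodn f i n' * f (i + n')%nat
  end.

Fixpoint sumn (f : nat -> R) (n : nat) : R :=
  match n with
  | O => 0
  | S n' => sumn f n' + f n'
  end.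

(* g_i = 1 + gam_i + gam_i gam_{i+1} + ... + gam_i ... gam_N :
   the terms are prodn gam i t for t = 0, ..., N+1-i. *)
Definition g_ (w : nat -> R) (N i : nat) : R :=
  sumn (fun t => prodn (gam w N) i t) (N + 2 - i)%nat.

(* Main.v *)
Require Import Defs.
From Stdlib Require Import Reals.
From Coquelicot Require Import Coquelicot.
From Stdlib Require Import Lra Lia.
Open Scope R_scope.

Lemma prodn_shift f i t : prodn f i (S t) = f i * prodn f (S i) t.
Proof.
  induction t as [|t IH]; simpl.
  - rewrite Nat.add_0_r; ring.
  - simpl in IH. rewrite IH. replace (i + S t)%nat with (S i + t)%nat by lia. simpl. ring.
Qed.

Lemma sumn_shift h n : sumn h (S n) = h 0%nat + sumn (fun t => h (S t)) n.
Proof.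
  induction n as [|n IH]; simpl.
  - ring.
  - simpl in IH. rewrite IH. ring.
Qed.

Lemma sumn_ext h1 h2 n : (forall t, h1 t = h2 t) -> sumn h1 n = sumn h2 n.
Proof. intros H; induction n; simpl; [reflexivity| rewrite IHn, H; reflexivity]. Qed.

Lemma sumn_scal c h n : sumn (fun t => c * h t) n = c * sumn h n.
Proof. induction n; simpl; [ring| rewrite IHn; ring]. Qed.

Lemma sumn_le h1 h2 n : (forall t, (t < n)%nat -> h1 t <= h2 t) -> sumn h1 n <= sumn h2 n.
Proof. intros H; induction n; simpl; [lra|].
  assert (sumn h1 n <= sumn h2 n) by (apply IHn; intros; apply H; lia).
  assert (h1 n <= h2 n) by (apply H; lia). lra. Qed.

Lemma g_rec w N i : (i <= N)%nat -> g_ w N i = 1 + gam w N i * g_ w N (S i).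
Proof.
  intros Hi. unfold g_.
  replace (N + 2 - i)%nat with (S (N + 2 - S i)) by lia.
  rewrite sumn_shift. simpl prodn at 1.
  rewrite <- sumn_scal. f_equal. apply sumn_ext. intros t. apply prodn_shift.
Qed.

Lemma g_last w N : g_ w N (S N) = 1.
Proof. unfold g_. replace (N + 2 - S N)%nat with 1%nat by lia. simpl. ring. Qed.

Lemma geom_sum x n : sumn (fun t => x ^ t) n * (1 - x) = 1 - x ^ n.
Proof. induction n; simpl; [ring|]. rewrite Rmult_plus_distr_r, IHn. ring. Qed.

Lemma exp_pow' x n : exp x ^ n = exp (x * INR n).
Proof. induction n; simpl pow. - simpl; rewrite Rmult_0_r, exp_0; ring.
  - rewrite IHn, S_INR, <- exp_plus. f_equal. ring. Qed.

Lemma prodn_ge f i : (forall j, (i <= j)%nat -> 0 <= f i <= f j) ->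
  forall t, f i ^ t <= prodn f i t.
Proof. intros H t; induction t; simpl; [lra|].
  rewrite Rmult_comm. apply Rmult_le_compat. 
  - apply pow_le. apply (H i); lia.
  - apply (H i); lia.
  - exact IHt.
  - apply H; lia.
Qed.

Definition TT (w : nat -> R) (N : nat) := INR N * theta w N ^ 2.

Lemma T_pos w N (HN : (1 <= N)%nat) (Hth : 1 < theta w N) : 0 < TT w N.
Proof. unfold TT. assert (1 <= INR N) by (apply (le_INR 1); lia). nra. Qed.

Lemma sq_sqr w N (HN : (1 <= N)%nat) (Hth : 1 < theta w N) j : (1 <= j <= S N)%nat -> sq w N j ^ 2 = 1 - (INR j - 1) / (TT w N) /\ 0 < 1 - (INR j - 1) / (TT w N).
Proof.
  intros Hj. assert (HT := T_pos w N HN Hth).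
  assert (Hle : (INR j - 1) / (TT w N) <= INR N / (TT w N)).
  { apply Rmult_le_compat_r. left; apply Rinv_0_lt_compat; lra.
    assert (INR j <= INR (S N)) by (apply le_INR; lia). rewrite S_INR in H. lra. }
  assert (Hlt : INR N / (TT w N) < 1).
  { assert (1 <= INR N) by (apply (le_INR 1); lia).
    apply Rmult_lt_reg_r with (TT w N); [exact HT|]. replace (INR N / (TT w N) * TT w N) with (INR N) by (field; apply Rgt_not_eq; exact HT).
    unfold TT. assert (0 < theta w N ^ 2 - 1) by (pose proof Hth; nra). assert (0 < INR N * (theta w N ^ 2 - 1)) by (apply Rmult_lt_0_compat; lra). nra. }
  split; [|lra]. unfold sq. fold (TT w N). apply pow2_sqrt. lra.
Qed.

Lemma sq_le1 w N (HN : (1 <= N)%nat) (Hth : 1 < theta w N) j : (1 <= j)%nat -> 0 <= sq w N j <= 1.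
Proof. intros Hj. split. apply sqrt_pos. unfold sq. apply Rle_trans with (sqrt 1); [|rewrite sqrt_1; lra]. apply sqrt_le_1_alt.
  assert (HT := T_pos w N HN Hth). fold (TT w N). assert (1 <= INR j) by (apply (le_INR 1); lia).
  assert (0 <= (INR j - 1) / (TT w N)) by (apply Rdiv_le_0_compat; lra). lra. Qed.

Lemma sq_anti w N (HN : (1 <= N)%nat) (Hth : 1 < theta w N) i j : (1 <= i <= j)%nat -> sq w N j <= sq w N i.
Proof. intros Hij. unfold sq. apply sqrt_le_1_alt. fold (TT w N). assert (HT := T_pos w N HN Hth).
  assert ((INR i - 1) / (TT w N) <= (INR j - 1) / (TT w N)); [|lra].
  apply Rmult_le_compat_r. left; apply Rinv_0_lt_compat; lra.
  assert (INR i <= INR j) by (apply le_INR; lia). lra. Qed.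

Lemma sq_step w N (HN : (1 <= N)%nat) (Hth : 1 < theta w N) i : (1 <= i <= N)%nat -> sq w N i ^ 2 - sq w N (S i) ^ 2 = / (TT w N).
Proof. intros Hi. destruct (sq_sqr w N HN Hth i) as [H1 _]. lia. destruct (sq_sqr w N HN Hth (S i)) as [H2 _]. lia.
  rewrite H1, H2, S_INR. field. apply Rgt_not_eq, (T_pos w N HN Hth). Qed.

Lemma sigma_sqr w N (HN : (1 <= N)%nat) (Hth : 1 < theta w N) : sq w N (S N) ^ 2 = 1 - / theta w N ^ 2.
Proof. destruct (sq_sqr w N HN Hth (S N)) as [H _]. lia. rewrite H, S_INR. unfold TT. field.
  assert (1 <= INR N) by (apply (le_INR 1); lia). split; lra. Qed.

Lemma sigma_pos w N (HN : (1 <= N)%nat) (Hth : 1 < theta w N) : 0 < sq w N (S N).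
Proof. destruct (sq_sqr w N HN Hth (S N)) as [H H']. lia. unfold sq. apply sqrt_lt_R0. fold (TT w N). exact H'. Qed.


Lemma step_real a b sg d e : 0 < sg -> sg <= b -> b <= a -> a <= 1 -> a^2 - b^2 = d -> 0 < e ->
  (1 + e) * (d / (4 * sg^3)) < e ->
  1 + (1 - a) / (1 + a) * ((1 + b) / (2 * b)) * (1 + e) < (1 + a) / (2 * a) * (1 + e).
Proof.
  intros Hs Hb Hba Ha1 Hd He Hk.
  set (D := (1 + b) / (2 * b) - (1 + a) / (2 * a)).
  assert (HD : D * (2 * a * b * (a + b)) = d) by (unfold D; rewrite <- Hd; field; lra).
  assert (Hp : 4 * sg^3 <= 2 * a * b * (a + b)).
  { assert (sg * sg <= a * b) by (apply Rmult_le_compat; lra).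
    assert (sg * sg * (2*sg) <= a * b * (a + b)) by (apply Rmult_le_compat; nra).
    simpl; nra. }
  assert (Hs3 : 0 < 4 * sg ^3) by (simpl; repeat apply Rmult_lt_0_compat; lra).
  assert (HD0 : 0 <= D).
  { unfold D. replace ((1 + b) / (2 * b) - (1 + a) / (2 * a)) with ((a - b) / (2 * a * b)) by (field; lra).
    apply Rdiv_le_0_compat; [lra|]. assert (0 < a*b) by nra. lra. }
  assert (HDle : D <= d / (4 * sg^3)).
  { apply Rmult_le_reg_r with (4 * sg^3); [exact Hs3|].
    replace (d / (4 * sg ^ 3) * (4 * sg ^ 3)) with d by (field; lra).
    rewrite <- HD. apply Rmult_le_compat_l; assumption. }
  set (g := (1 - a) / (1 + a)).
  assert (Hg : 0 <= g <= 1) by (unfold g; split; [apply Rdiv_le_0_compat; lra| apply Rmult_le_reg_r with (1+a); [lra|]; unfold Rdiv; rewrite Rmult_assoc, Rinv_l by lra; lra]).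
  assert (Hf : (1 + a) / (2 * a) = 1 + g * ((1 + a) / (2 * a))) by (unfold g; field; lra).
  replace ((1 + b) / (2 * b)) with ((1 + a) / (2 * a) + D) by (unfold D; ring).
  assert (g * D * (1 + e) <= D * (1 + e)) by (apply Rmult_le_compat_r; [lra|]; nra).
  assert (D * (1+e) <= d / (4 * sg ^ 3) * (1 + e)) by (apply Rmult_le_compat_r; lra).
  rewrite Hf at 2. nra.
Qed.

Lemma gam_eq w N j : gam w N j = (1 - sq w N j) / (1 + sq w N j).
Proof. reflexivity. Qed.

Lemma f_ge1 s : 0 < s <= 1 -> 1 <= (1 + s) / (2 * s).
Proof. intros H. apply Rmult_le_reg_r with (2*s); [lra|].
  replace ((1 + s) / (2 * s) * (2 * s)) with (1+s) by (field; lra). lra. Qed.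

Lemma upper_ind w N (HN : (1 <= N)%nat) (Hth : 1 < theta w N) e (He : 0 < e)
  (Hk : (1 + e) * (/ TT w N / (4 * sq w N (S N) ^ 3)) < e) :
  forall d i, (i + d = S N)%nat -> (1 <= i)%nat ->
    g_ w N i < (1 + sq w N i) / (2 * sq w N i) * (1 + e).
Proof.
  assert (Hsg := sigma_pos w N HN Hth).
  induction d as [|d IH]; intros i Hid Hi.
  - replace i with (S N) by lia. rewrite g_last.
    assert (0 < sq w N (S N) <= 1) by (split; [lra| apply (sq_le1 w N HN Hth); lia]).
    pose proof (f_ge1 _ H). nra.
  - assert (IH' := IH (S i) ltac:(lia) ltac:(lia)).
    rewrite g_rec by lia. rewrite gam_eq.
    assert (Hb : sq w N (S N) <= sq w N (S i)) by (apply (sq_anti w N HN Hth); lia).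
    assert (Hba : sq w N (S i) <= sq w N i) by (apply (sq_anti w N HN Hth); lia).
    assert (Ha : 0 <= sq w N i <= 1) by (apply (sq_le1 w N HN Hth); lia).
    assert (Hg : 0 <= (1 - sq w N i) / (1 + sq w N i)) by (apply Rdiv_le_0_compat; lra).
    assert (Hst := sq_step w N HN Hth i ltac:(lia)).
    pose proof (step_real (sq w N i) (sq w N (S i)) (sq w N (S N)) (/ TT w N) e Hsg Hb Hba (proj2 Ha) Hst He Hk) as Hs.
    assert ((1 - sq w N i) / (1 + sq w N i) * g_ w N (S i) <=
            (1 - sq w N i) / (1 + sq w N i) * ((1 + sq w N (S i)) / (2 * sq w N (S i)) * (1 + e)))
      by (apply Rmult_le_compat_l; lra).
    rewrite Rmult_assoc in Hs. lra.
Qed.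

Lemma gam_mono a b : 0 <= b -> b <= a -> (1 - a) / (1 + a) <= (1 - b) / (1 + b).
Proof. intros Hb Hba. apply Rmult_le_reg_r with ((1+a)*(1+b)); [nra|].
  replace ((1 - a) / (1 + a) * ((1 + a) * (1 + b))) with ((1-a)*(1+b)) by (field; lra).
  replace ((1 - b) / (1 + b) * ((1 + a) * (1 + b))) with ((1-b)*(1+a)) by (field; lra). nra. Qed.

Lemma lower_main w N (HN : (1 <= N)%nat) (Hth : 1 < theta w N) i L :
  (1 <= i <= S N)%nat ->
  ((1 - sq w N i) / (1 + sq w N i)) ^ (N + 2 - i) < L ->
  g_ w N i > (1 + sq w N i) / (2 * sq w N i) * (1 - L).
Proof.
  intros Hi HL.
  set (s := sq w N i). set (gm := (1 - s) / (1 + s)). set (n := (N + 2 - i)%nat).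
  assert (Hs : 0 < s <= 1).
  { split. apply Rlt_le_trans with (sq w N (S N)). apply (sigma_pos w N HN Hth). apply (sq_anti w N HN Hth); lia.
    apply (sq_le1 w N HN Hth); lia. }
  assert (HG : sumn (fun t => gm ^ t) n <= g_ w N i).
  { unfold g_. apply sumn_le. intros t _. replace gm with (gam w N i) by reflexivity. apply prodn_ge. intros j Hj.
    rewrite !gam_eq. fold s. split. apply Rdiv_le_0_compat; lra.
    apply gam_mono. apply (sq_le1 w N HN Hth); lia. apply (sq_anti w N HN Hth); lia. }
  assert (Hgeo := geom_sum gm n).
  set (F := (1 + s) / (2 * s)).
  assert (HF : F * (1 - gm) = 1) by (unfold F, gm; field; lra).
  assert (HF0 : 0 < F) by (unfold F; apply Rdiv_lt_0_compat; lra).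
  assert (sumn (fun t => gm ^ t) n = F * (1 - gm ^ n)).
  { replace (sumn (fun t => gm ^ t) n) with (sumn (fun t => gm ^ t) n * (F * (1 - gm))) by (rewrite HF; ring).
    rewrite <- Hgeo; ring. }
  apply Rlt_le_trans with (sumn (fun t => gm ^ t) n); [|exact HG].
  rewrite H. apply Rmult_lt_compat_l; [exact HF0|]. unfold n, gm, s in *. lra.
Qed.

Lemma gam_pow_bound s n : 0 <= s <= 1 -> ((1 - s) / (1 + s)) ^ n <= exp (- (s * INR n)).
Proof. intros Hs.
  replace (- (s * INR n)) with (- s * INR n) by ring. rewrite <- exp_pow'.
  apply pow_incr. split. apply Rdiv_le_0_compat; lra.
  apply Rle_trans with (1 - s).
  - apply Rmult_le_reg_r with (1+s); [lra|].
    replace ((1 - s) / (1 + s) * (1 + s)) with (1-s) by (field; lra). nra.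
  - pose proof (exp_ineq1_le (-s)). lra.
Qed.

Lemma lnN_facts N : (27 <= N)%nat -> 3 <= ln (INR N) /\ 1 <= ln (ln (INR N)).
Proof.
  intros HN. assert (H27 : 27 <= INR N).
  { replace 27 with (INR 27) by (simpl; ring). apply le_INR; lia. }
  assert (He1 := exp_le_3). assert (He0 := exp_pos 1).
  assert (Hexp3 : exp 3 <= 27).
  { replace 3 with (1 + 1 + 1) by ring. rewrite !exp_plus.
    apply Rle_trans with (3*3*3); [|lra].
    repeat apply Rmult_le_compat; try lra; nra. }
  assert (Hl : 3 <= ln (INR N)).
  { rewrite <- (ln_exp 3). apply ln_le. apply exp_pos. lra. }
  split; [exact Hl|]. rewrite <- (ln_exp 1). apply ln_le. apply exp_pos. lra.
Qed.

Lemma num_up sg c u v th : 0 < c -> c <= sg -> 0 < u -> 1 <= v -> 1 < th < 2 -> c = v / (u * th) ->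
  (1 + / v ^ 3) * (/ (u ^ 3 * th ^ 2) / (4 * sg ^ 3)) < / v ^ 3.
Proof.
  intros Hc Hcs Hu Hv Hth Hceq.
  assert (Hc3 : c ^ 3 <= sg ^ 3) by (apply pow_incr; lra).
  assert (Hc3p : 0 < c ^ 3) by (apply pow_lt; lra).
  assert (Hle : / (u ^ 3 * th ^ 2) / (4 * sg ^ 3) <= / (u ^ 3 * th ^ 2) / (4 * c ^ 3)).
  { unfold Rdiv. apply Rmult_le_compat_l. left; apply Rinv_0_lt_compat; apply Rmult_lt_0_compat; apply pow_lt; lra.
    apply Rinv_le_contravar; lra. }
  assert (Heq : / (u ^ 3 * th ^ 2) / (4 * c ^ 3) = th / 4 * / v ^ 3).
  { rewrite Hceq. field. repeat split; lra. }
  assert (Hv3 : 1 <= v ^ 3) by (replace 1 with (1 ^ 3) by ring; apply pow_incr; lra).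
  assert (Hiv : 0 < / v ^ 3 <= 1).
  { split. apply Rinv_0_lt_compat; lra. rewrite <- Rinv_1. apply Rinv_le_contravar; lra. }
  set (e := / v ^ 3) in *.
  assert (0 <= 1 + e) by lra.
  apply Rle_lt_trans with ((1 + e) * (th / 4 * e)).
  - apply Rmult_le_compat_l; lra.
  - nra.
Qed.

Lemma good_N w N : 0 < w N -> (27 <= N)%nat -> w N < ln (INR N) ^ 2 / 9 ->
  let u := Rpower (INR N) (1/3) in let v := sqrt (w N) in
  0 < u /\ u ^ 3 = INR N /\ 0 < v /\ v ^ 2 = w N /\ 1 < theta w N < 2 /\
  v / (u * theta w N) <= sq w N (S N).
Proof.
  intros Hw HN Hup u v.
  assert (HNr : 27 <= INR N) by (replace 27 with (INR 27) by (simpl; ring); apply le_INR; lia).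
  destruct (lnN_facts N HN) as [Hl _].
  assert (Hu : 0 < u) by (unfold u, Rpower; apply exp_pos).
  assert (Hu3 : u ^ 3 = INR N).
  { rewrite <- Rpower_pow by exact Hu. unfold u. rewrite Rpower_mult.
    replace (1 / 3 * INR 3) with 1 by (simpl; field). apply Rpower_1; lra. }
  assert (Hu2 : Rpower (INR N) (- (2 / 3)) * u ^ 2 = 1).
  { rewrite <- Rpower_pow by exact Hu. unfold u. rewrite Rpower_mult, <- Rpower_plus.
    replace (- (2 / 3) + 1 / 3 * INR 2) with 0 by (simpl; field). apply Rpower_O; lra. }
  assert (Hlu : ln (INR N) < 3 * u).
  { unfold u, Rpower. pose proof (exp_ineq1_le (1/3 * ln (INR N))). lra. }
  assert (Hv : 0 < v) by (unfold v; apply sqrt_lt_R0; exact Hw).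
  assert (Hv2 : v ^ 2 = w N) by (unfold v; apply pow2_sqrt; lra).
  assert (Hth : theta w N = 1 + v ^ 2 / u ^ 2).
  { unfold theta. rewrite Hv2. replace (Rpower (INR N) (- (2 / 3))) with (/ u ^ 2).
    field. lra. apply Rmult_eq_reg_r with (u ^ 2). rewrite Hu2. field. lra.
    apply Rgt_not_eq, pow_lt; lra. }
  assert (Hwu : w N < u ^ 2).
  { apply Rlt_trans with (ln (INR N) ^ 2 / 9); [exact Hup|]. nra. }
  assert (Hq : 0 < v ^ 2 / u ^ 2 < 1).
  { split. apply Rdiv_lt_0_compat; apply pow_lt; lra.
    apply Rmult_lt_reg_r with (u^2). apply pow_lt; lra.
    replace (v ^ 2 / u ^ 2 * u ^ 2) with (v ^ 2) by (field; lra). lra. }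
  assert (Hth12 : 1 < theta w N < 2) by lra.
  do 5 (split; [assumption|]).
  assert (HN1 : (1 <= N)%nat) by lia.
  assert (Hsg := sigma_sqr w N HN1 (proj1 Hth12)).
  assert (Hsgp := sigma_pos w N HN1 (proj1 Hth12)).
  set (th := theta w N) in *. set (sg := sq w N (S N)) in *.
  assert (Hc2 : (v / (u * th)) ^ 2 <= sg ^ 2).
  { rewrite Hsg. replace ((v / (u * th)) ^ 2) with ((th - 1) / th ^ 2) by (rewrite Hth; field; lra).
    replace (1 - / th ^ 2) with ((th ^ 2 - 1) / th ^ 2) by (field; lra).
    unfold Rdiv. apply Rmult_le_compat_r. left; apply Rinv_0_lt_compat; nra. nra. }
  assert (0 < v / (u * th)) by (apply Rdiv_lt_0_compat; nra).
  destruct (Rle_lt_dec (v / (u * th)) sg) as [H'|H']; [exact H'|].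
  exfalso. set (c := v / (u * th)) in *. simpl in Hc2. nra.
Qed.

Lemma lim_ev (f : nat -> R) (eps : R) : 0 < eps -> is_lim_seq f 0 ->
  exists N0, forall n, (N0 <= n)%nat -> f n < eps.
Proof.
  intros He H. apply is_lim_seq_spec in H. destruct (H (mkposreal eps He)) as [N0 HN0].
  exists N0. intros n Hn. specialize (HN0 n Hn). simpl in HN0.
  pose proof (Rle_abs (f n - 0)). lra.
Qed.

Lemma rfrac w N i : r_ w N i / (2 * (r_ w N i - 1)) = (1 + sq w N i) / (2 * sq w N i).
Proof. unfold r_. f_equal. f_equal. ring. Qed.

Theorem lemma3 (w : nat -> R)
  (hw_pos : forall N : nat, 0 < w N)
  (hw_low : is_lim_seq (fun N => (ln (ln (INR N)))^2 / w N) 0)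
  (hw_up : is_lim_seq (fun N => w N / (ln (INR N))^2) 0) :
  (forall k : R, 0 < k ->
     exists N0 : nat, forall N : nat, (N0 <= N)%nat ->
       forall i : nat, (3 <= i)%nat -> INR i <= INR N - Rpower (INR N) (1/3) ->
         g_ w N i > r_ w N i / (2 * (r_ w N i - 1)) * (1 - Rpower (ln (INR N)) (- k)))
  /\
  (exists N0 : nat, forall N : nat, (N0 <= N)%nat ->
     forall i : nat, (3 <= i)%nat -> (i <= N)%nat ->
       g_ w N i < r_ w N i / (2 * (r_ w N i - 1)) * (1 + Rpower (w N) (-(3/2)))).
Proof.
  destruct (lim_ev _ (/9) ltac:(lra) hw_up) as [N1 HN1].
  assert (Hup : forall N, (N1 <= N)%nat -> (27 <= N)%nat -> w N < ln (INR N) ^ 2 / 9).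
  { intros N Ha Hb. specialize (HN1 N Ha). simpl in HN1.
    destruct (lnN_facts N Hb) as [Hl _]. assert (0 < ln (INR N) ^ 2) by nra.
    apply Rmult_lt_reg_r with (/ ln (INR N) ^ 2). apply Rinv_0_lt_compat; lra.
    replace (ln (INR N) ^ 2 / 9 * / ln (INR N) ^ 2) with (/9) by (field; lra). exact HN1. }
  split.
  - intros k Hk.
    assert (Hk2 : 0 < / (4 * k ^ 2)) by (apply Rinv_0_lt_compat; nra).
    destruct (lim_ev _ _ Hk2 hw_low) as [N3 HN3].
    exists (max 27 (max N1 N3)). intros N HN i Hi3 Hiu.
    assert (H27 : (27 <= N)%nat) by lia.
    assert (Hw := hw_pos N).
    destruct (good_N w N Hw H27 (Hup N ltac:(lia) H27)) as (Hu & Hu3 & Hv & Hv2 & Hth & Hc).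
    set (u := Rpower (INR N) (1/3)) in *. set (v := sqrt (w N)) in *.
    destruct (lnN_facts N H27) as [Hl Hll].
    assert (Hvk : 2 * k * ln (ln (INR N)) < v).
    { specialize (HN3 N ltac:(lia)). simpl in HN3.
      assert (ln (ln (INR N)) ^ 2 < w N / (4 * k ^ 2)).
      { apply Rmult_lt_reg_r with (/ w N). apply Rinv_0_lt_compat; lra.
        replace (w N / (4 * k ^ 2) * / w N) with (/ (4 * k ^ 2)) by (field; lra). exact HN3. }
      assert ((2 * k * ln (ln (INR N))) ^ 2 < v ^ 2).
      { rewrite Hv2. apply Rmult_lt_reg_r with (/ (4 * k ^ 2)); [exact Hk2|].
        replace ((2 * k * ln (ln (INR N))) ^ 2 * / (4 * k ^ 2)) with (ln (ln (INR N)) ^ 2) by (field; lra).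
        exact H. }
      assert (0 < 2 * k * ln (ln (INR N))) by (apply Rmult_lt_0_compat; lra).
      simpl in H0. nra. }
    assert (HiN : (i < N)%nat).
    { apply INR_lt. lra. }
    rewrite rfrac. apply lower_main. lia.
    unfold theta in Hth |- *. lra. lia.
    set (n := (N + 2 - i)%nat).
    assert (Hn : u < INR n).
    { unfold n. rewrite minus_INR by lia. rewrite plus_INR. simpl (INR 2). lra. }
    assert (HN1' : (1 <= N)%nat) by lia.
    assert (Hs1 : sq w N (S N) <= sq w N i) by (apply (sq_anti w N HN1' (proj1 Hth)); lia).
    assert (Hsi : 0 <= sq w N i <= 1) by (apply (sq_le1 w N HN1' (proj1 Hth)); lia).
    apply Rle_lt_trans with (exp (- (sq w N i * INR n))).
    apply gam_pow_bound; exact Hsi.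
    unfold Rpower. apply exp_increasing.
    set (th := theta w N) in *.
    assert (Hcu : v / (u * th) * u = v / th) by (field; lra).
    assert (v / th * 2 > v).
    { apply Rmult_lt_reg_r with th. lra. replace (v / th * 2 * th) with (2 * v) by (field; lra). nra. }
    assert (v / (u * th) * u <= sq w N i * INR n).
    { apply Rmult_le_compat. apply Rlt_le, Rdiv_lt_0_compat; nra. lra. lra. lra. }
    nra.
  - destruct (lim_ev _ 1 ltac:(lra) hw_low) as [N2 HN2].
    exists (max 27 (max N1 N2)). intros N HN i Hi3 HiN.
    assert (H27 : (27 <= N)%nat) by lia.
    assert (Hw := hw_pos N).
    destruct (good_N w N Hw H27 (Hup N ltac:(lia) H27)) as (Hu & Hu3 & Hv & Hv2 & Hth & Hc).
    set (u := Rpower (INR N) (1/3)) in *. set (v := sqrt (w N)) in *.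
    destruct (lnN_facts N H27) as [Hl Hll].
    assert (Hw1 : 1 < w N).
    { specialize (HN2 N ltac:(lia)). simpl in HN2.
      apply Rmult_lt_reg_r with (/ w N). apply Rinv_0_lt_compat; lra.
      rewrite Rinv_r by lra. apply Rle_lt_trans with (ln (ln (INR N)) ^ 2 / w N); [|exact HN2].
      unfold Rdiv. apply Rmult_le_compat_r. left; apply Rinv_0_lt_compat; lra. nra. }
    assert (Hv1 : 1 <= v) by (simpl in Hv2; nra).
    assert (He : Rpower (w N) (- (3 / 2)) = / v ^ 3).
    { rewrite Rpower_Ropp. f_equal. unfold v. rewrite <- Rpower_sqrt by lra.
      rewrite <- Rpower_pow by (unfold Rpower; apply exp_pos). rewrite Rpower_mult.
      f_equal. simpl. field. }
    rewrite rfrac, He.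
    assert (HN1' : (1 <= N)%nat) by lia.
    assert (Hep : 0 < / v ^ 3) by (apply Rinv_0_lt_compat; apply pow_lt; lra).
    assert (Hk : (1 + / v ^ 3) * (/ TT w N / (4 * sq w N (S N) ^ 3)) < / v ^ 3).
    { unfold TT. rewrite <- Hu3.
      apply (num_up _ (v / (u * theta w N))); try lra.
      apply Rdiv_lt_0_compat; nra. }
    exact (upper_ind w N HN1' (proj1 Hth) _ Hep Hk (S N - i) i ltac:(lia) ltac:(lia)).
Qed.
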